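(* Let $\lambda\in(0,1)$, $T\ge1$, $p\in\Delta(K)$, $q\in\Delta(L)$. The value $V_{\lambda,T}(p,q)$ of the $\lambda$-discounted $T$-stage game satisfies $$V_{\lambda,T}(p,q)=\max\sum_{l\in L}q^lu_{l,0;\lambda,T}$$ over $x\in X_T(p)$, reals $u_{l,0;\lambda,T}$ and real $|A|\times|B|$ matrices $u_{l,h^A,h^B;\lambda,T}$ ($l\in L$, $h^A\in A^{s-1},h^B\in B^{s-1}$, $s=1,\dots,T-1$; equal to $0$ for histories of length $T-1$), subject to $\lambda\sum_k(M^{kl})^Tx_{k,\emptyset,\emptyset}+(1-\lambda)(u_{l,\emptyset,\emptyset;\lambda,T})^T\mathbf1\ge u_{l,0;\lambda,T}\mathbf1$ for all $l$, and $\lambda\sum_k(M^{kl})^Tx_{k,(h^A,a),(h^B,b)}+(1-\lambda)(u_{l,(h^A,a),(h^B,b);\lambda,T})^T\mathbf1\ge u^{a,b}_{l,h^A,h^B;\lambda,T}\mathbf1$ for all $s=1,\dots,T-1$, $l$, $h^A\in A^{s-1},h^B\in B^{s-1}$, $a,b$. The $x$-part $x^\star$ of an optimal solution is an optimal realization plan of player 1 in $\Gamma_{\lambda,T}(p,q)$, and $u_{l,0;\lambda,T}(x^\star)=u^\star_{l,0;\lambda,T}$ for all $l$, where $u^\star_{:,0;\lambda,T}$ is the corresponding part of the optimal solution. Dually, $V_{\lambda,T}(p,q)=\min\sum_kp^kw_{k,0;\lambda,T}$ over $y\in Y_T(q)$, reals $w_{k,0;\lambda,T}$ and $|A|\times|B|$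 matrices $w_{k,h^A,h^B;\lambda,T}$ (zero for histories of length $T-1$), subject to $\lambda\sum_lM^{kl}y_{l,\emptyset,\emptyset}+(1-\lambda)w_{k,\emptyset,\emptyset;\lambda,T}\mathbf1\le w_{k,0;\lambda,T}\mathbf1$ for all $k$ and $\lambda\sum_lM^{kl}y_{l,(h^A,a),(h^B,b)}+(1-\lambda)w_{k,(h^A,a),(h^B,b);\lambda,T}\mathbf1\le w^{a,b}_{k,h^A,h^B;\lambda,T}\mathbf1$ for all $s=1,\dots,T-1$, $k$, $h^A,h^B$ of length $s-1$, $a,b$; the $y$-part $y^\star$ of an optimal solution is an optimal realization plan of player 2 and $w_{k,0;\lambda,T}(y^\star)=w^\star_{k,0;\lambda,T}$ for all $k$.
   Context: Setting: nonempty finite $K,L,A,B$; $M:K\times L\times A\times B\to\mathbb R$, $M^{kl}=(M(k,l,a,b))_{a,b}$; $p\in\Delta(K),q\in\Delta(L)$ with positive entries. Types $k\sim p$, $l\sim q$ drawn independently and told privately to players 1 and 2; at each stage actions $a_t\in A,b_t\in B$ chosen simultaneously and announced; behavior strategies $\sigma_t:K\times A^{t-1}\times B^{t-1}\to\Delta(A)$, $\tau_t:L\times A^{t-1}\times B^{t-1}\to\Delta(B)$. The $\lambda$-discounted $T$-stage game $\Gamma_{\lambda,T}(p,q)$ has payoff $\mathbb E_{p,q,\sigma,\tau}[\sum_{t=1}^T\lambda(1-\lambda)^{t-1}M(k,l,a_t,b_t)]$ to player 1 (maximizer), value $V_{\lambda,T}(p,q)$. $X_T(p)$: families $x=(x_{k,h^A,h^B})$,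 $k\in K$, $h^A\in A^{t-1},h^B\in B^{t-1}$, $t=1,\dots,T$, $x_{k,h^A,h^B}\in\mathbb R^{|A|}$, $x\ge0$, $\mathbf1^Tx_{k,\emptyset,\emptyset}=p^k$, $\mathbf1^Tx_{k,(h^A,a),(h^B,b)}=x^a_{k,h^A,h^B}$; the realization plan of $\sigma$ is $x^{a_t}_{k,h_t^A,h_t^B}=p^k\prod_{s=1}^t\sigma^{a_s}_s(k,h^A_s,h^B_s)$ (prefix histories), and $x\in X_T(p)$ determines $\sigma$ by ratios. $Y_T(q)$ symmetric with $y_{l,h^A,h^B}\in\mathbb R^{|B|}$ and $q$. An optimal realization plan is that of a security strategy. Anti-discounted weighted future security payoffs at stage 0: for $x\in X_T(p)$ with strategy $\sigma$, $u_{l,0;\lambda,T}(x)=\min_{\tau(l)}\sum_kp^k\,\mathbb E[\sum_{s=1}^T\lambda(1-\lambda)^{s-1}M(k,l,a_s,b_s)\mid k,l]$, the minimum over behavior strategies of player 2 of type $l$; for $y\in Y_T(q)$ with strategy $\tau$, $w_{k,0;\lambda,T}(y)=\max_{\sigma(k)}\sum_lq^l\,\mathbb E[\sum_{s=1}^T\lambda(1-\lambda)^{s-1}M(k,l,a_s,b_s)\mid k,l]$. *)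

(* Defs.v *)
From mathcomp Require Import all_boot all_order all_algebra.
From mathcomp Require Import classical_sets reals.
Set Implicit Arguments. Unset Strict Implicit. Unset Printing Implicit Defensive.
Import Order.TTheory GRing.Theory Num.Theory.
Local Open Scope ring_scope.
Local Open Scope classical_set_scope.

(* Conventions.
   - A history pair (h^A,h^B) of stage t is a pair of sequences of equal
     length t-1 (first action first); extensions by [rcons].
   - A behavior strategy of player 1 is sigma : K -> seq A -> seq B -> A -> R;
     only its values at equal-length histories of length < T matter.
   - Realization plans / LP variables are functions on all histories; only
     the values at the relevant histories are constrained / used. *)

Section Game.
Variables (R : realType) (K L A B : finType) (M : K -> L -> A -> B -> R)
  (p : K -> R) (q : L -> R) (lam : R) (T : nat).

Definition behav (X : finType) (s : seq A -> seq B -> X -> R) : Prop :=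
  forall hA hB, size hA = size hB -> (size hA < T)%N ->
    (forall x, 0 <= s hA hB x) /\ \sum_x s hA hB x = 1.

Definition strat1_ok (sigma : K -> seq A -> seq B -> A -> R) :=
  forall k, behav (sigma k).
Definition strat2_ok (tau : L -> seq A -> seq B -> B -> R) :=
  forall l, behav (tau l).

(* cont sigma tau k l hA hB n = conditional expected discounted payoff
   (given types k,l and history (hA,hB)) accumulated over the next n stages;
   stage t = size hA + 1 has weight lam (1-lam)^(t-1). *)
Fixpoint cont (sigma : K -> seq A -> seq B -> A -> R)
  (tau : L -> seq A -> seq B -> B -> R) (k : K) (l : L)
  (hA : seq A) (hB : seq B) (n : nat) : R :=
  if n is n'.+1 then
    \sum_a \sum_b sigma k hA hB a * tau l hA hB b *
      (lam * (1 - lam) ^+ size hA * M k l a b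
       + cont sigma tau k l (rcons hA a) (rcons hB b) n')
  else 0.

Definition payoff sigma tau : R :=
  \sum_k \sum_l p k * q l * cont sigma tau k l [::] [::] T.

Definition value : R :=
  sup [set v | exists2 s, strat1_ok s &
         v = inf [set w | exists2 t, strat2_ok t & w = payoff s t]].

Definition security1 sigma :=
  strat1_ok sigma /\ forall tau, strat2_ok tau -> value <= payoff sigma tau.
Definition security2 tau :=
  strat2_ok tau /\ forall sigma, strat1_ok sigma -> payoff sigma tau <= value.

Definition rplan1 (sigma : K -> seq A -> seq B -> A -> R)
  (x : K -> seq A -> seq B -> A -> R) :=
  forall k hA hB a, size hA = size hB -> (size hA < T)%N ->
    x k hA hB a = p k *
      (\prod_(s < size hA) sigma k (take s hA) (take s hB) (nth a hA s)) *
      sigma k hA hB a.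
Definition rplan2 (tau : L -> seq A -> seq B -> B -> R)
  (y : L -> seq A -> seq B -> B -> R) :=
  forall l hA hB b, size hA = size hB -> (size hA < T)%N ->
    y l hA hB b = q l *
      (\prod_(s < size hB) tau l (take s hA) (take s hB) (nth b hB s)) *
      tau l hA hB b.

Definition inX (x : K -> seq A -> seq B -> A -> R) :=
  [/\ (forall k hA hB a, size hA = size hB -> (size hA < T)%N ->
         0 <= x k hA hB a),
      (forall k, \sum_a x k [::] [::] a = p k) &
      (forall k hA hB a b, size hA = size hB -> ((size hA).+1 < T)%N ->
         \sum_a' x k (rcons hA a) (rcons hB b) a' = x k hA hB a)].
Definition inY (y : L -> seq A -> seq B -> B -> R) :=
  [/\ (forall l hA hB b, size hA = size hB -> (size hA < T)%N ->
         0 <= y l hA hB b),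
      (forall l, \sum_b y l [::] [::] b = q l) &
      (forall l hA hB a b, size hA = size hB -> ((size hA).+1 < T)%N ->
         \sum_b' y l (rcons hA a) (rcons hB b) b' = y l hA hB b)].

(* strategy determined by a realization plan via ratios (arbitrary, here
   uniform, at histories of zero probability) *)
Definition sigma_of (x : K -> seq A -> seq B -> A -> R) k hA hB a : R :=
  let d := \sum_a' x k hA hB a' in
  if d == 0 then #|A|%:R^-1 else x k hA hB a / d.
Definition tau_of (y : L -> seq A -> seq B -> B -> R) l hA hB b : R :=
  let d := \sum_b' y l hA hB b' in
  if d == 0 then #|B|%:R^-1 else y l hA hB b / d.

Definition u_sec (x : K -> seq A -> seq B -> A -> R) (l : L) : R :=
  inf [set v | exists2 t : seq A -> seq B -> B -> R, behav t &
        v = \sum_k p k * cont (sigma_of x) (fun _ => t) k l [::] [::] T].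
Definition w_sec (y : L -> seq A -> seq B -> B -> R) (k : K) : R :=
  sup [set v | exists2 s : seq A -> seq B -> A -> R, behav s &
        v = \sum_l q l * cont (fun _ => s) (tau_of y) k l [::] [::] T].

(* the primal LP: variables x, u0 (= u_{:,0}), U (= matrices u_{l,hA,hB}) *)
Definition primal_feas (x : K -> seq A -> seq B -> A -> R) (u0 : L -> R)
  (U : L -> seq A -> seq B -> A -> B -> R) :=
  [/\ inX x,
      (forall l hA hB a b, size hA = size hB -> size hA = T.-1 ->
         U l hA hB a b = 0),
      (forall l b', lam * (\sum_k \sum_a' M k l a' b' * x k [::] [::] a')
                    + (1 - lam) * (\sum_a' U l [::] [::] a' b') >= u0 l) &
      (forall l hA hB a b b', size hA = size hB -> ((size hA).+1 < T)%N ->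
         lam * (\sum_k \sum_a' M k l a' b' * x k (rcons hA a) (rcons hB b) a')
         + (1 - lam) * (\sum_a' U l (rcons hA a) (rcons hB b) a' b')
         >= U l hA hB a b)].
Definition primal_obj (u0 : L -> R) : R := \sum_l q l * u0 l.

(* the dual LP: variables y, w0 (= w_{:,0}), W (= matrices w_{k,hA,hB}) *)
Definition dual_feas (y : L -> seq A -> seq B -> B -> R) (w0 : K -> R)
  (W : K -> seq A -> seq B -> A -> B -> R) :=
  [/\ inY y,
      (forall k hA hB a b, size hA = size hB -> size hA = T.-1 ->
         W k hA hB a b = 0),
      (forall k a', lam * (\sum_l \sum_b' M k l a' b' * y l [::] [::] b')
                    + (1 - lam) * (\sum_b' W k [::] [::] a' b') <= w0 k) &
      (forall k hA hB a b a', size hA = size hB -> ((size hA).+1 < T)%N ->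
         lam * (\sum_l \sum_b' M k l a' b' * y l (rcons hA a) (rcons hB b) b')
         + (1 - lam) * (\sum_b' W k (rcons hA a) (rcons hB b) a' b')
         <= W k hA hB a b)].
Definition dual_obj (w0 : K -> R) : R := \sum_k p k * w0 k.

End Game.

(* Main.v *)
Require Import Defs.
From mathcomp Require Import all_boot all_order all_algebra.
From mathcomp Require Import classical_sets reals.
From mathcomp Require Import ring lra zify.
From mathcomp Require Import boolp.
Import Order.TTheory GRing.Theory Num.Theory.
Local Open Scope ring_scope.

Module FMPart.
Set Implicit Arguments. Unset Strict Implicit. Unset Printing Implicit Defensive.
Import Order.TTheory GRing.Theory Num.Theory.
Local Open Scope ring_scope.

Section FM.
Variable R : realFieldType.

Lemma sum_ind1 (C : finType) (c : C) (F : C -> R) :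
  \sum_e (e == c)%:R * F e = F c.
Proof.
rewrite (bigD1 c) //= eqxx mul1r big1 ?addr0 // => e /negbTE ->.
by rewrite mul0r.
Qed.

Lemma bigmin_le_x (C : finType) (P : pred C) (F : C -> R) x j :
  P j -> \big[Num.min/x]_(i | P i) F i <= F j.
Proof. by move=> Pj; rewrite (bigD1 j) //= ge_min lexx. Qed.

Lemma bigmin_le0 (C : finType) (P : pred C) (F : C -> R) x :
  \big[Num.min/x]_(i | P i) F i <= x.
Proof.
elim/big_rec: _ => // i y _ hy; rewrite ge_min hy orbT //.
Qed.

Lemma bigmin_ge (C : finType) (P : pred C) (F : C -> R) x y :
  y <= x -> (forall i, P i -> y <= F i) -> y <= \big[Num.min/x]_(i | P i) F i.
Proof.
move=> yx yF; elim/big_rec: _ => // i z Pi hz; rewrite le_min hz yF //.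
Qed.

Lemma bigmax_ge_x (C : finType) (P : pred C) (F : C -> R) x j :
  P j -> F j <= \big[Num.max/x]_(i | P i) F i.
Proof. by move=> Pj; rewrite (bigD1 j) //= le_max lexx. Qed.

Lemma ord_cases n (i : 'I_n.+1) :
  i = ord_max \/ exists j : 'I_n, i = widen_ord (leqnSn n) j.
Proof.
case: i => m hm; case: (ltnP m n) => h.
  by right; exists (Ordinal h); apply: val_inj.
by left; apply: val_inj => /=; apply/eqP; rewrite eqn_leq h -ltnS hm.
Qed.

Theorem farkas n : forall (C : finType) (a : C -> 'I_n -> R) (b : C -> R),
  (exists z : 'I_n -> R, forall c, b c <= \sum_i a c i * z i) \/
  (exists w : C -> R, [/\ (forall c, 0 <= w c),
     (forall i, \sum_c w c * a c i = 0) & 0 < \sum_c w c * b c]).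
Proof.
elim: n => [|n IH] C a b.
  case: (boolP [forall c, b c <= 0]) => [/forallP hb | ].
    left; exists (fun _ => 0) => c; rewrite big_ord0; exact: hb.
  rewrite negb_forall => /existsP [c hc]; right.
  exists (fun e => (e == c)%:R); split.
  - by move=> e; rewrite ler0n.
  - by case.
  - by rewrite sum_ind1 ltNge.
pose an c := a c ord_max.
pose lam (c' : ((C * C) + C)%type) (e : C) : R :=
  match c' with
  | inl (c, d) => if (0 < an c) && (an d < 0)
                  then (e == c)%:R * (- an d) + (e == d)%:R * an c else 0
  | inr c => if an c == 0 then (e == c)%:R else 0 end.
have lam_ge0 c' e : 0 <= lam c' e.
  case: c' => [[c d]|c]; rewrite /lam /=.
    case: ifP => // /andP [h1 h2].
    by rewrite addr_ge0 // mulr_ge0 ?ler0n // ?oppr_ge0 ltW.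
  by case: ifP => //; rewrite ler0n.
have lam_an c' : \sum_e lam c' e * an e = 0.
  case: c' => [[c d]|c]; rewrite /lam /=.
    case H : ((0 < an c) && (an d < 0)); last first.
      by rewrite big1 // => e _; rewrite mul0r.
    under eq_bigr do rewrite mulrDl -!mulrA.
    by rewrite big_split /= !sum_ind1; ring.
  case H : (an c == 0); first by rewrite (sum_ind1 c an); apply/eqP.
  by rewrite big1 // => e _; rewrite mul0r.
pose a' c' (i : 'I_n) := \sum_e lam c' e * a e (widen_ord (leqnSn n) i).
pose b' c' := \sum_e lam c' e * b e.
case: (IH _ a' b') => [[z' hz'] | [w' [w'0 w'a w'b]]]; last first.
  right; exists (fun e => \sum_c' w' c' * lam c' e); split.
  - by move=> e; apply: sumr_ge0 => c' _; rewrite mulr_ge0.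
  - move=> i.
    have -> : \sum_c (\sum_c' w' c' * lam c' c) * a c i =
              \sum_c' w' c' * \sum_e lam c' e * a e i.
      under eq_bigr do rewrite mulr_suml.
      rewrite exchange_big /=; apply: eq_bigr => c' _.
      by rewrite mulr_sumr; apply: eq_bigr => e _; rewrite mulrA.
    case: (ord_cases i) => [-> | [j ->]].
      by rewrite big1 // => c' _; rewrite lam_an mulr0.
    exact: w'a.
  - have -> : \sum_c (\sum_c' w' c' * lam c' c) * b c =
              \sum_c' w' c' * b' c'.
      under eq_bigr do rewrite mulr_suml.
      rewrite exchange_big /=; apply: eq_bigr => c' _.
      by rewrite /b' mulr_sumr; apply: eq_bigr => e _; rewrite mulrA.
    exact: w'b.
left.
pose s c := \sum_(i < n) a c (widen_ord (leqnSn n) i) * z' i.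
pose Lc c := (b c - s c) / an c.
pose X := \big[Num.max/0]_(c | 0 < an c) Lc c.
pose t := \big[Num.min/X]_(d | an d < 0) Lc d.
pose z (i : 'I_n.+1) := match insub (val i) with Some j => z' j | None => t end.
exists z => c.
rewrite big_ord_recr /=.
have -> : z ord_max = t by rewrite /z insubF //= ltnn.
have -> : \sum_(i < n) a c (widen_ord (leqnSn n) i) * z (widen_ord (leqnSn n) i) = s c.
  apply: eq_bigr => i _; congr (_ * _).
  rewrite /z /= insubT // => hi /=; congr z'; exact: val_inj.
have lamF c1 d1 (F : C -> R) : 0 < an c1 -> an d1 < 0 ->
    \sum_e lam (inl (c1, d1)) e * F e = - an d1 * F c1 + an c1 * F d1.
  move=> h1 h2; rewrite /lam h1 h2 /=.
  under eq_bigr do rewrite mulrDl -!mulrA.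
  by rewrite big_split /= !sum_ind1.
have lamS c' : \sum_i a' c' i * z' i = \sum_e lam c' e * s e.
  rewrite /a'; under eq_bigr do rewrite mulr_suml.
  rewrite exchange_big /=; apply: eq_bigr => e _.
  by rewrite /s mulr_sumr; apply: eq_bigr => i _; rewrite mulrA.
have pair c1 d1 : 0 < an c1 -> an d1 < 0 -> Lc c1 <= Lc d1.
  move=> h1 h2.
  have := hz' (inl (c1, d1)); rewrite lamS /b' !lamF // => H.
  rewrite /Lc ler_pdivrMr // mulrC mulrA ler_ndivlMr //.
  rewrite -subr_ge0 -(subr_ge0 _ (_ * _)) in H *.
  move: H; congr (0 <= _); rewrite /an; ring.
case: (ltrgt0P (an c)) => h.
-
  have ht : Lc c <= t.
    apply: bigmin_ge; first exact: bigmax_ge_x.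
    by move=> d hd; exact: pair.
  rewrite -(ler_pM2l h) in ht.
  rewrite /Lc [X in X <= _]mulrC divfK ?gt_eqF // in ht.
  rewrite /an in ht; lra.
- have ht : t <= Lc c by apply: bigmin_le_x.
  rewrite -(ler_nM2l h) in ht.
  rewrite /Lc [X in X <= _]mulrC divfK ?lt_eqF // in ht.
  rewrite /an in ht; lra.
- have := hz' (inr c); rewrite lamS /b' /lam /= h eqxx !sum_ind1.
  by rewrite /an in h; rewrite h mul0r addr0.
Qed.

End FM.

End FMPart.
Import FMPart.

Module MMPart.
Set Implicit Arguments. Unset Strict Implicit. Unset Printing Implicit Defensive.
Import Order.TTheory GRing.Theory Num.Theory.
Local Open Scope ring_scope.
Local Open Scope classical_set_scope.

Section MM.
Variable R : realType.

Definition dist (I : finType) (mu : I -> R) :=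
  (forall i, 0 <= mu i) /\ \sum_i mu i = 1.

Lemma argmin (J : finType) (j0 : J) (f : J -> R) : exists j1, forall j, f j1 <= f j.
Proof. by case: (@arg_minP _ _ J j0 predT f isT) => j1 _ h; exists j1 => j; exact: h. Qed.

Lemma argmax (J : finType) (j0 : J) (f : J -> R) : exists j1, forall j, f j <= f j1.
Proof.
case: (argmin j0 (fun j => - f j)) => j1 h; exists j1 => j.
by rewrite -lerN2; exact: h.
Qed.

Lemma sum_enum (I : finType) (F : I -> R) :
  \sum_(k < #|I|) F (enum_val k) = \sum_i F i.
Proof. by rewrite -(big_enum_val (A := I) F). Qed.

Lemma dist_avg (I : finType) (mu : I -> R) (X : I -> R) v :
  dist mu -> (forall i, X i <= v) -> \sum_i mu i * X i <= v.
Proof.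
case=> mu0 mu1 hX.
apply: (@le_trans _ _ (\sum_i mu i * v)).
  by apply: ler_sum => i _; apply: ler_wpM2l.
by rewrite -mulr_suml mu1 mul1r.
Qed.

Lemma dist_avg_ge (I : finType) (mu : I -> R) (X : I -> R) v :
  dist mu -> (forall i, v <= X i) -> v <= \sum_i mu i * X i.
Proof.
case=> mu0 mu1 hX.
apply: (@le_trans _ _ (\sum_i mu i * v)).
  by rewrite -mulr_suml mu1 mul1r.
by apply: ler_sum => i _; apply: ler_wpM2l.
Qed.

Lemma alt1 (I J : finType) (j0 : J) (Bm : I -> J -> R) :
  (exists mu, dist mu /\ forall j, 0 < \sum_i mu i * Bm i j) \/
  (exists nu, dist nu /\ forall i, \sum_j Bm i j * nu j <= 0).
Proof.
pose a (c : (I + J)%type) (k : 'I_#|I|) : R :=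
  match c with inl i => (enum_val k == i)%:R | inr j => Bm (enum_val k) j end.
pose b (c : (I + J)%type) : R := match c with inl i => 0 | inr j => 1 end.
case: (farkas a b) => [[z hz]|[w [w0 wa wb]]].
  pose mu0 i := z (enum_rank i).
  have hsum (F : I -> R) : \sum_k F (enum_val k) * z k = \sum_i F i * mu0 i.
    rewrite -(sum_enum (fun i => F i * mu0 i)); apply: eq_bigr => k _.
    by rewrite /mu0 enum_valK.
  have mu0_ge0 i : 0 <= mu0 i.
    have := hz (inl i); rewrite /= (hsum (fun i' => (i' == i)%:R)).
    by rewrite (sum_ind1 i mu0).
  have mu0B j : 1 <= \sum_i mu0 i * Bm i j.
    have := hz (inr j); rewrite /= (hsum (fun i' => Bm i' j)).
    by under eq_bigr do rewrite mulrC.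
  have s_gt0 : 0 < \sum_i mu0 i.
    rewrite lt_neqAle sumr_ge0 // andbT; apply/eqP => /esym hs.
    have h0 := psumr_eq0P (fun i _ => mu0_ge0 i) hs.
    have := mu0B j0; rewrite big1 ?ler10 // => i _.
    by rewrite h0 // mul0r.
  left; exists (fun i => mu0 i / \sum_i mu0 i); split; first split.
  - by move=> i; rewrite divr_ge0 // ltW.
  - by rewrite -mulr_suml divff // gt_eqF.
  - move=> j; under eq_bigr do rewrite mulrAC.
    rewrite -mulr_suml divr_gt0 //; apply: lt_le_trans (mu0B j); exact: ltr01.
pose s := \sum_j w (inr j).
have s_eq : \sum_c w c * b c = s.
  by rewrite big_sumType /= big1 ?add0r; [apply: eq_bigr => j _; rewrite mulr1|move=> i _; rewrite mulr0].
have s_gt0 : 0 < s by rewrite -s_eq.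
right; exists (fun j => w (inr j) / s); split; first split.
- by move=> j; rewrite divr_ge0 // ltW.
- by rewrite -mulr_suml divff // gt_eqF.
- move=> i; have := wa (enum_rank i); rewrite big_sumType /= enum_rankK.
  rewrite (eq_bigr (fun i' => (i' == i)%:R * w (inl i'))); last first.
    by move=> i' _; rewrite mulrC eq_sym.
  rewrite (sum_ind1 i (fun i' => w (inl i'))) => H.
  under eq_bigr do rewrite mulrA.
  rewrite -mulr_suml pmulr_lle0 ?invr_gt0 //.
  have -> : \sum_j Bm i j * w (inr j) = - w (inl i).
    by apply/eqP; rewrite -addr_eq0 addrC; under eq_bigr do rewrite mulrC; apply/eqP.
  by rewrite oppr_le0.
Qed.

Theorem minimax (I J : finType) (i0 : I) (j0 : J) (A : I -> J -> R) :
  exists v mu nu, [/\ dist mu, dist nu,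
    (forall j, v <= \sum_i mu i * A i j) &
    (forall i, \sum_j A i j * nu j <= v)].
Proof.
pose S := [set v | exists nu, dist nu /\ forall i, \sum_j A i j * nu j <= v].
have [j1 hj1] := argmin j0 (A i0).
have lbS : lbound S (A i0 j1).
  move=> v [nu [dnu hnu]]; apply: le_trans (hnu i0).
  by under eq_bigr do rewrite mulrC; exact: dist_avg_ge.
have nuj0 : dist (fun j => (j == j0)%:R).
  by split; [move=> j; rewrite ler0n| rewrite (bigD1 j0) //= eqxx big1 ?addr0 // => j /negbTE ->].
have [i1 hi1] := argmax i0 (fun i => A i j0).
have S0 : S (A i1 j0).
  exists (fun j => (j == j0)%:R); split => // i.
  rewrite (bigD1 j0) //= eqxx mulr1 big1 ?addr0 ?hi1 // => j /negbTE ->.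
  by rewrite mulr0.
have hlb : has_lbound S by exists (A i0 j1).
pose v := inf S.
have vS : S v.
  case: (alt1 j0 (fun i j => A i j - v)) => [[mu [dmu hmu]]|[nu [dnu hnu]]].
    pose g j := \sum_i mu i * A i j.
    have [j2 hj2] := argmin j0 g.
    have gv : v < g j2.
      have := hmu j2; under eq_bigr do rewrite mulrBr.
      by rewrite sumrB -mulr_suml dmu.2 mul1r subr_gt0.
    have : g j2 <= v.
      apply: lb_le_inf; first by exists (A i1 j0).
      move=> w [nu [dnu hnu]].
      apply: (@le_trans _ _ (\sum_i mu i * \sum_j A i j * nu j)); last exact: dist_avg.
      have -> : \sum_i mu i * \sum_j A i j * nu j = \sum_j nu j * g j.
        under eq_bigr do rewrite mulr_sumr.
        rewrite exchange_big /=; apply: eq_bigr => j _.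
        rewrite /g mulr_sumr; apply: eq_bigr => i _; ring.
      exact: dist_avg_ge.
    by rewrite leNgt gv.
  exists nu; split => // i.
  have := hnu i; under eq_bigr do rewrite mulrBl.
  by rewrite sumrB -mulr_sumr dnu.2 mulr1 subr_le0.
case: (vS) => nu [dnu hnu].
case: (alt1 i0 (fun j i => v - A i j)) => [[mu [dmu hmu]]|[mu [dmu hmu]]].
  pose h i := \sum_j A i j * mu j.
  have [i2 hi2] := argmax i0 h.
  have hv : h i2 < v.
    have := hmu i2; under eq_bigr do rewrite mulrBr.
    rewrite sumrB -mulr_suml dmu.2 mul1r subr_gt0.
    by under eq_bigr do rewrite mulrC.
  have : S (h i2) by exists mu; split.
  move/(ge_inf hlb) => hh.
  by move: hv; rewrite ltNge hh.
exists v, mu, nu; split => // j.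
have := hmu j; under eq_bigr do rewrite mulrBl.
by rewrite sumrB -mulr_sumr dmu.2 mulr1 subr_le0; under eq_bigr do rewrite mulrC.
Qed.

End MM.

End MMPart.
Import MMPart.

Module CorePart.
Set Implicit Arguments. Unset Strict Implicit. Unset Printing Implicit Defensive.
Import Order.TTheory GRing.Theory Num.Theory.
Local Open Scope ring_scope.

Section Core.
Variables (R : realType) (K L A B : finType) (M : K -> L -> A -> B -> R)
  (p : K -> R) (q : L -> R) (lam : R) (T : nat).

Lemma eq_ler (x y : R) : x = y -> x <= y. Proof. by move=> ->. Qed.

Fixpoint Fl (x : K -> seq A -> seq B -> A -> R) (t : seq A -> seq B -> B -> R)
  (l : L) (hA : seq A) (hB : seq B) (n : nat) : R :=
  if n is n'.+1 then
    \sum_b t hA hB b *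
      (\sum_k \sum_a x k hA hB a * (lam * (1 - lam) ^+ size hA * M k l a b)
       + \sum_a Fl x t l (rcons hA a) (rcons hB b) n')
  else 0.

Definition rr (x : K -> seq A -> seq B -> A -> R) k hA hB := \sum_a x k hA hB a.

Definition planof (sigma : K -> seq A -> seq B -> A -> R) x :=
  forall k hA hB a, size hA = size hB -> (size hA < T)%N ->
    x k hA hB a = rr x k hA hB * sigma k hA hB a.

Lemma cont_tau sigma tau k l hA hB n :
  cont M lam sigma tau k l hA hB n = cont M lam sigma (fun _ => tau l) k l hA hB n.
Proof.
elim: n hA hB => [//|n IH] hA hB /=.
by apply: eq_bigr => a _; apply: eq_bigr => b _; rewrite IH.
Qed.

Lemma Fl_cont x sigma t l : inX p T x -> planof sigma x ->
  forall n hA hB, size hA = size hB -> (size hA + n = T)%N ->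
  Fl x t l hA hB n =
  \sum_k rr x k hA hB * cont M lam sigma (fun _ => t) k l hA hB n.
Proof.
move=> [x0 x1 x2] hpl; elim=> [|n IH] hA hB hs hT /=.
  by rewrite big1 // => k _; rewrite mulr0.
have hlt : (size hA < T)%N by lia.
have child a b : Fl x t l (rcons hA a) (rcons hB b) n =
    \sum_k x k hA hB a * cont M lam sigma (fun _ => t) k l (rcons hA a) (rcons hB b) n.
  case: n IH hT => [|n] IH hT.
    by rewrite /= big1 // => k _; rewrite mulr0.
  rewrite IH ?size_rcons ?hs //; last by lia.
  apply: eq_bigr => k _; rewrite /rr x2 //; lia.
under eq_bigr => b _.
  under [X in _ + X]eq_bigr => a _ do rewrite child.
  over.
pose F k a b := t hA hB b * (x k hA hB a * (lam * (1 - lam) ^+ size hA * M k l a b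
   + cont M lam sigma (fun _ => t) k l (rcons hA a) (rcons hB b) n)).
transitivity (\sum_b \sum_k \sum_a F k a b).
  apply: eq_bigr => b _.
  rewrite [X in _ + X]exchange_big /= -big_split /= mulr_sumr.
  apply: eq_bigr => k _; rewrite -big_split /= mulr_sumr.
  by apply: eq_bigr => a _; rewrite /F; ring.
rewrite exchange_big /=; apply: eq_bigr => k _.
rewrite exchange_big /= mulr_sumr; apply: eq_bigr => a _.
rewrite mulr_sumr; apply: eq_bigr => b _.
rewrite /F (hpl _ _ _ _ hs hlt); ring.
Qed.


Lemma Fl_lin (I : finType) (mu : I -> R) xs t l : forall n hA hB,
  Fl (fun k hA hB a => \sum_i mu i * xs i k hA hB a) t l hA hB n =
  \sum_i mu i * Fl (xs i) t l hA hB n.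
Proof.
elim=> [|n IH] hA hB /=; first by rewrite big1 // => i _; rewrite mulr0.
under eq_bigr => b _ do under [X in _ + X]eq_bigr => a _ do rewrite IH.
transitivity (\sum_b \sum_i mu i * (t hA hB b * (\sum_k \sum_a xs i k hA hB a *
   (lam * (1 - lam) ^+ size hA * M k l a b) +
   \sum_a Fl (xs i) t l (rcons hA a) (rcons hB b) n))); last first.
  by rewrite exchange_big /=; apply: eq_bigr => i _; rewrite mulr_sumr.
apply: eq_bigr => b _; under [RHS]eq_bigr do rewrite mulrCA; rewrite -mulr_sumr; congr (_ * _).
under [RHS]eq_bigr do rewrite mulrDr.
rewrite big_split /=; congr (_ + _).
  under eq_bigr do under eq_bigr do rewrite mulr_suml.
  under eq_bigr do rewrite exchange_big /=.
  rewrite exchange_big /=; apply: eq_bigr => i _.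
  rewrite mulr_sumr; apply: eq_bigr => k _; rewrite mulr_sumr.
  by apply: eq_bigr => a _; rewrite !mulrA.
by rewrite exchange_big /=; apply: eq_bigr => a _; rewrite mulr_sumr.
Qed.

Lemma Fl_ext x t t' l :
  (forall hA hB b, size hA = size hB -> (size hA < T)%N -> t hA hB b = t' hA hB b) ->
  forall n hA hB, size hA = size hB -> (size hA + n = T)%N ->
  Fl x t l hA hB n = Fl x t' l hA hB n.
Proof.
move=> htt; elim=> [//|n IH] hA hB hs hT /=.
apply: eq_bigr => b _; rewrite htt //; last by lia.
congr (_ * (_ + _)); apply: eq_bigr => a _; apply: IH; rewrite ?size_rcons ?hs //; lia.
Qed.

Lemma Fl_lb x u0 U t l : primal_feas M p lam T x u0 U -> 0 <= lam <= 1 ->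
  (1 <= T)%N -> behav T t -> u0 l <= Fl x t l [::] [::] T.
Proof.
move=> [[x0 x1 x2] U0 c3 c4] /andP [lam0 lam1] T1 bt.
have lam1' : 0 <= 1 - lam by rewrite subr_ge0.
pose E hA hB b := lam * (\sum_k \sum_a M k l a b * x k hA hB a)
                  + (1 - lam) * (\sum_a U l hA hB a b).
have key : forall n hA hB, size hA = size hB -> (size hA + n.+1 = T)%N ->
   (1 - lam) ^+ size hA * \sum_b t hA hB b * E hA hB b <= Fl x t l hA hB n.+1.
  elim=> [|n IH] hA hB hs hT.
  - rewrite /= mulr_sumr; apply: ler_sum => b _.
    have [tb0 _] := bt hA hB hs (ltac:(lia)).
    rewrite mulrCA; apply: ler_wpM2l => //.
    rewrite big1_eq addr0 /E.
    have -> : \sum_a U l hA hB a b = 0 by apply: big1 => a _; apply: U0 => //; lia.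
    rewrite mulr0 addr0.
    rewrite mulrA mulr_sumr; apply: eq_ler; apply: eq_bigr => k _.
    rewrite mulr_sumr; apply: eq_bigr => a _; ring.
  - have hlt : (size hA < T)%N by lia.
    have child a b : (1 - lam) ^+ (size hA).+1 * U l hA hB a b <=
                     Fl x t l (rcons hA a) (rcons hB b) n.+1.
      have hs' : size (rcons hA a) = size (rcons hB b) by rewrite !size_rcons hs.
      have hT' : (size (rcons hA a) + n.+1 = T)%N by rewrite size_rcons; lia.
      apply: le_trans (IH _ _ hs' hT').
        rewrite size_rcons; apply: ler_wpM2l; first exact: exprn_ge0.
        have [tc0 tc1] := bt (rcons hA a) (rcons hB b) hs' (ltac:(rewrite size_rcons; lia)).
        apply: (@le_trans _ _ (\sum_b' t (rcons hA a) (rcons hB b) b' * U l hA hB a b)).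
          by rewrite -mulr_suml tc1 mul1r.
        apply: ler_sum => b' _; apply: ler_wpM2l => //.
        by apply: c4 => //; lia.
    rewrite [Fl _ _ _ _ _ _.+1]/= mulr_sumr; apply: ler_sum => b _.
    have [tb0 _] := bt hA hB hs hlt.
    rewrite mulrCA; apply: ler_wpM2l => //.
    apply: (@le_trans _ _ (\sum_k \sum_a x k hA hB a * (lam * (1 - lam) ^+ size hA * M k l a b)
       + \sum_a (1 - lam) ^+ (size hA).+1 * U l hA hB a b)).
      rewrite /E mulrDr; apply: eq_ler; congr (_ + _).
        rewrite mulrA mulr_sumr; apply: eq_bigr => k _.
        rewrite mulr_sumr; apply: eq_bigr => a _; ring.
      rewrite mulrA mulr_sumr; apply: eq_bigr => a _; rewrite exprSr; ring.
    by rewrite lerD2l; apply: ler_sum => a _; apply: child.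
have eT : T = (T.-1).+1 by lia.
have hT : (size (@nil A) + (T.-1).+1 = T)%N by rewrite /=; lia.
rewrite [in X in _ <= X]eT.
apply: le_trans (key T.-1 [::] [::] erefl hT).
rewrite expr0 mul1r.
have [t0 t1] := bt [::] [::] erefl (ltac:(rewrite /=; lia)).
apply: (@le_trans _ _ (\sum_b t [::] [::] b * u0 l)); first by rewrite -mulr_suml t1 mul1r.
by apply: ler_sum => b _; apply: ler_wpM2l => //; apply: c3.
Qed.


Definition EE x l (V : seq A -> seq B -> R) hA hB b :=
  lam * (\sum_k \sum_a M k l a b * x k hA hB a)
  + (1 - lam) * \sum_a V (rcons hA a) (rcons hB b).
Definition barg (b0 : B) x l V hA hB : B := Order.arg_min b0 xpredT (EE x l V hA hB).
Fixpoint Vr b0 x l n hA hB : R :=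
  if n is n'.+1 then EE x l (Vr b0 x l n') hA hB (barg b0 x l (Vr b0 x l n') hA hB)
  else 0.
Definition U0 b0 x l (hA : seq A) (hB : seq B) a b :=
  Vr b0 x l (T - (size hA).+1) (rcons hA a) (rcons hB b).
Definition u00 b0 x l := Vr b0 x l T [::] [::].
Definition gbr b0 x l (hA : seq A) (hB : seq B) :=
  barg b0 x l (Vr b0 x l (T - (size hA).+1)) hA hB.
Definition tg b0 x l hA hB b : R := (gbr b0 x l hA hB == b)%:R.

Lemma Vr_le b0 x l n hA hB b : Vr b0 x l n.+1 hA hB <= EE x l (Vr b0 x l n) hA hB b.
Proof. by rewrite /= /barg; case: arg_minP => // b1 _ h; exact: h. Qed.

Lemma sum_ind2 (C : finType) (c : C) (F : C -> R) :
  \sum_e (c == e)%:R * F e = F c.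
Proof. by under eq_bigr do rewrite eq_sym; rewrite sum_ind1. Qed.

Lemma tg_behav b0 x l : behav T (tg b0 x l).
Proof.
move=> hA hB _ _; split; first by move=> b; rewrite ler0n.
rewrite /tg (eq_bigr (fun b => (gbr b0 x l hA hB == b)%:R * 1)).
  by rewrite (sum_ind2 (gbr b0 x l hA hB) (fun _ => 1)).
by move=> b _; rewrite mulr1.
Qed.

Lemma BR_feas b0 x : inX p T x -> (1 <= T)%N ->
  primal_feas M p lam T x (u00 b0 x) (U0 b0 x).
Proof.
move=> hx T1; split => //.
- move=> l hA hB a b hs hT; rewrite /U0.
  by rewrite (_ : (T - (size hA).+1 = 0)%N) //; lia.
- move=> l b'; have := Vr_le b0 x l (T - 1) [::] [::] b'.
  rewrite (_ : ((T - 1).+1 = T)%N); last by lia.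
  by rewrite /EE /U0 /u00 /=.
- move=> l hA hB a b b' hs hT.
  have := Vr_le b0 x l (T - (size hA).+2) (rcons hA a) (rcons hB b) b'.
  rewrite (_ : ((T - (size hA).+2).+1 = T - (size hA).+1)%N); last by lia.
  by rewrite /EE /U0 size_rcons.
Qed.

Lemma BR_val b0 x l : forall n hA hB, size hA = size hB -> (size hA + n = T)%N ->
  Fl x (tg b0 x l) l hA hB n = (1 - lam) ^+ size hA * Vr b0 x l n hA hB.
Proof.
elim=> [|n IH] hA hB hs hT /=; first by rewrite mulr0.
set g := barg b0 x l (Vr b0 x l n) hA hB.
have htg b : tg b0 x l hA hB b = (g == b)%:R.
  by rewrite /tg /gbr (_ : (T - (size hA).+1 = n)%N) //; lia.
rewrite (bigD1 g) //= [X in _ + X]big1 ?addr0; last first.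
  by move=> b hb; rewrite htg eq_sym (negbTE hb) mul0r.
rewrite htg eqxx mul1r.
have hc a : Fl x (tg b0 x l) l (rcons hA a) (rcons hB g) n =
    (1 - lam) ^+ (size hA).+1 * Vr b0 x l n (rcons hA a) (rcons hB g).
  by rewrite IH ?size_rcons ?hs //; lia.
under [X in _ + X]eq_bigr => a _ do rewrite hc.
rewrite /EE mulrDr; congr (_ + _).
  rewrite mulrA mulr_sumr; apply: eq_bigr => k _.
  rewrite mulr_sumr; apply: eq_bigr => a _; ring.
rewrite mulrA mulr_sumr; apply: eq_bigr => a _; rewrite exprSr; ring.
Qed.


Lemma inX_sum (x : K -> seq A -> seq B -> A -> R) : inX p T x -> forall k, \sum_a x k [::] [::] a = p k.
Proof. by case. Qed.

Lemma payoff_Fl x sigma tau : inX p T x -> planof sigma x ->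
  payoff M p q lam T sigma tau = \sum_l q l * Fl x (tau l) l [::] [::] T.
Proof.
move=> hx hpl; rewrite /payoff exchange_big /=; apply: eq_bigr => l _.
rewrite (Fl_cont (tau l) l hx hpl) // mulr_sumr; apply: eq_bigr => k _.
by rewrite /rr (inX_sum hx) (cont_tau sigma tau); ring.
Qed.

Lemma usec_Fl x t l : inX p T x -> planof (sigma_of x) x ->
  \sum_k p k * cont M lam (sigma_of x) (fun _ => t) k l [::] [::] T = Fl x t l [::] [::] T.
Proof.
move=> hx hpl; rewrite (Fl_cont t l hx hpl) //; apply: eq_bigr => k _.
by rewrite /rr (inX_sum hx).
Qed.

Lemma sigma_of_ok x : inX p T x -> (0 < #|A|)%N ->
  strat1_ok T (sigma_of x) /\ planof (sigma_of x) x.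
Proof.
move=> [x0 x1 x2] hA0; split.
  move=> k hA hB hs hT; rewrite /sigma_of /=.
  have d0 : 0 <= \sum_a' x k hA hB a' by apply: sumr_ge0 => a _; apply: x0.
  case: eqP => hd; split.
  - by move=> a; rewrite invr_ge0 ler0n.
  - rewrite sumr_const -(mulr_natr (#|A|%:R^-1)) mulVf // pnatr_eq0 -lt0n //.
  - by move=> a; rewrite divr_ge0 // x0.
  - by rewrite -mulr_suml divff //; apply/eqP.
move=> k hA hB a hs hT; rewrite /sigma_of /rr /=.
case: eqP => hd.
  rewrite hd mul0r; apply: (psumr_eq0P _ hd) => // a' _; exact: x0.
by rewrite mulrC divfK //; apply/eqP.
Qed.

Lemma prod_default (f : seq A -> seq B -> A -> R) hA hB d d' :
  \prod_(s < size hA) f (take s hA) (take s hB) (nth d hA s) =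
  \prod_(s < size hA) f (take s hA) (take s hB) (nth d' hA s).
Proof. by apply: eq_bigr => i _; rewrite (set_nth_default d' d (ltn_ord i)). Qed.

Lemma prod_rcons (f : seq A -> seq B -> A -> R) hA hB a0 b0 d :
  size hA = size hB ->
  \prod_(s < size (rcons hA a0)) f (take s (rcons hA a0)) (take s (rcons hB b0)) (nth d (rcons hA a0) s) =
  (\prod_(s < size hA) f (take s hA) (take s hB) (nth d hA s)) * f hA hB a0.
Proof.
move=> hs; rewrite size_rcons big_ord_recr /=; congr (_ * _).
  apply: eq_bigr => i _ /=.
  rewrite -!cats1 !takel_cat ?hs ?(ltnW (ltn_ord i)) -?hs ?(ltnW (ltn_ord i)) //.
  by rewrite nth_cat ltn_ord.
rewrite -!cats1 take_size_cat // take_size_cat -?hs //.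
by rewrite nth_cat ltnn subnn.
Qed.

Lemma rr_prod x sigma k : inX p T x -> planof sigma x ->
  forall hA hB d, size hA = size hB -> (size hA < T)%N ->
  rr x k hA hB = p k * \prod_(s < size hA) sigma k (take s hA) (take s hB) (nth d hA s).
Proof.
move=> [x0 x1 x2] hpl.
elim/last_ind => [|hA a0 IH] hB d hs hT.
  by rewrite /= (size0nil (esym hs)) big_ord0 mulr1 /rr x1.
case/lastP: hB hs => [|hB b0] hs; first by rewrite size_rcons in hs.
have hs' : size hA = size hB by move: hs; rewrite !size_rcons => -[].
rewrite size_rcons in hT.
rewrite /rr (x2 _ _ _ _ _ hs' hT).
rewrite prod_rcons // (hpl _ _ _ _ hs' (ltnW hT)).
by rewrite (IH hB d hs' (ltnW hT)) mulrA.
Qed.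

Lemma rplan_sigma_of (x : K -> seq A -> seq B -> A -> R) : inX p T x -> (0 < #|A|)%N -> rplan1 p T (sigma_of x) x.
Proof.
move=> hx hA0; have [_ hpl] := sigma_of_ok hx hA0.
move=> k hA hB a hs hT.
by rewrite (hpl _ _ _ _ hs hT) (@rr_prod x (sigma_of x) k hx hpl hA hB a hs hT).
Qed.

Definition xp (sigma : K -> seq A -> seq B -> A -> R) k hA hB a :=
  p k * (\prod_(s < size hA) sigma k (take s hA) (take s hB) (nth a hA s)) * sigma k hA hB a.

Lemma xp_ok sigma : strat1_ok T sigma -> (forall k, 0 <= p k) -> (0 < T)%N ->
  inX p T (xp sigma) /\ planof sigma (xp sigma).
Proof.
move=> hs hp T1.
have hrr k hA hB d : size hA = size hB -> (size hA < T)%N ->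
    rr (xp sigma) k hA hB = p k * \prod_(s < size hA) sigma k (take s hA) (take s hB) (nth d hA s).
  move=> hsz hT; rewrite /rr /xp.
  under eq_bigr do rewrite (prod_default _ _ _ _ d).
  by rewrite -mulr_sumr (proj2 (hs k hA hB hsz hT)) mulr1.
split; last first.
  by move=> k hA hB a hsz hT; rewrite (hrr k hA hB a hsz hT).
split.
- move=> k hA hB a hsz hT; rewrite /xp.
  rewrite mulr_ge0 ?(proj1 (hs k hA hB hsz hT)) // mulr_ge0 //.
  apply: prodr_ge0 => i _; apply: (proj1 (hs _ _ _ _ _)).
  + by rewrite !size_take -hsz ltn_ord.
  + by rewrite size_take ltn_ord; apply: ltn_trans hT.
- move=> k; rewrite /xp; under eq_bigr => a _ do rewrite big_ord0 mulr1.
  by rewrite -mulr_sumr (proj2 (hs k [::] [::] erefl T1)) mulr1.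
- move=> k hA hB a b hsz hT.
  rewrite -/(rr (xp sigma) k (rcons hA a) (rcons hB b)).
  rewrite (hrr k _ _ a); last 2 first.
  - by rewrite !size_rcons hsz.
  - by rewrite size_rcons.
  by rewrite prod_rcons // /xp mulrA.
Qed.


End Core.

End CorePart.
Import CorePart.

Module HalfPart.
Set Implicit Arguments. Unset Strict Implicit. Unset Printing Implicit Defensive.
Import Order.TTheory GRing.Theory Num.Theory.
Local Open Scope ring_scope.
Local Open Scope classical_set_scope.

Lemma inf_min (R : realType) (S : set R) m : S m -> lbound S m -> inf S = m.
Proof.
move=> Sm lbm; apply/le_anti/andP; split.
  by apply: (ge_inf (ex_intro _ m lbm)).
by apply: lb_le_inf => //; exists m.
Qed.

Section Half.
Variables (R : realType) (K L A B : finType) (M : K -> L -> A -> B -> R)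
  (p : K -> R) (q : L -> R) (lam : R) (T : nat).
Hypotheses (hlam : 0 < lam < 1) (hT : (1 <= T)%N) (hA0 : (0 < #|A|)%N)
  (b0 : B) (hp : forall k, 0 < p k) (hq : forall l, 0 < q l).

Let hlam' : 0 <= lam <= 1.
Proof. by case/andP: hlam => h1 h2; rewrite !ltW. Qed.

Lemma feas_le_payoff x u0 U tau : primal_feas M p lam T x u0 U ->
  strat2_ok T tau -> primal_obj q u0 <= payoff M p q lam T (sigma_of x) tau.
Proof.
move=> hf ht; have hx : inX p T x by case: hf.
have [_ hpl] := sigma_of_ok hx hA0.
rewrite (payoff_Fl M q lam tau hx hpl) /primal_obj.
apply: ler_sum => l _; apply: ler_wpM2l; first exact: ltW.
exact: (Fl_lb l hf hlam' hT (ht l)).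
Qed.

Lemma payoff_lb sigma : strat1_ok T sigma ->
  exists c, forall tau, strat2_ok T tau -> c <= payoff M p q lam T sigma tau.
Proof.
move=> hs; have [hx hpl] := xp_ok hs (fun k => ltW (hp k)) hT.
exists (primal_obj q (u00 M lam T b0 (xp p sigma))) => tau ht.
rewrite (payoff_Fl M q lam tau hx hpl) /primal_obj.
apply: ler_sum => l _; apply: ler_wpM2l; first exact: ltW.
exact: (Fl_lb l (BR_feas M lam b0 hx hT) hlam' hT (ht l)).
Qed.

Lemma BR_payoff x : inX p T x ->
  primal_obj q (u00 M lam T b0 x) = payoff M p q lam T (sigma_of x) (tg M lam T b0 x).
Proof.
move=> hx; have [_ hpl] := sigma_of_ok hx hA0.
rewrite (payoff_Fl M q lam _ hx hpl) /primal_obj; apply: eq_bigr => l _.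
by rewrite (BR_val M lam b0 x l (hA := [::]) (hB := [::])) // expr0 mul1r.
Qed.

Lemma half1 v :
  (exists taus, strat2_ok T taus /\
     forall sigma, strat1_ok T sigma -> payoff M p q lam T sigma taus <= v) ->
  (exists xs, inX p T xs /\
     forall tau, strat2_ok T tau -> v <= payoff M p q lam T (sigma_of xs) tau) ->
  [/\ (exists x u0 U, primal_feas M p lam T x u0 U /\ primal_obj q u0 = v),
      (forall x u0 U, primal_feas M p lam T x u0 U -> primal_obj q u0 <= v) &
      (forall x u0 U, primal_feas M p lam T x u0 U -> primal_obj q u0 = v ->
         (exists sigma, (strat1_ok T sigma /\
             forall tau, strat2_ok T tau -> v <= payoff M p q lam T sigma tau)
           /\ rplan1 p T sigma x) /\
         (forall l, u_sec M p lam T x l = u0 l))].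
Proof.
move=> [taus [hts Hub]] [xs [hxs Hlb]].
have P2 x u0 U : primal_feas M p lam T x u0 U -> primal_obj q u0 <= v.
  move=> hf; have hx : inX p T x by case: hf.
  apply: le_trans (feas_le_payoff hf hts) _; apply: Hub.
  exact: (proj1 (sigma_of_ok hx hA0)).
split => //.
  exists xs, (u00 M lam T b0 xs), (U0 M lam T b0 xs); split.
    exact: BR_feas.
  apply/le_anti/andP; split; first by apply: P2; apply: BR_feas.
  rewrite BR_payoff //; apply: Hlb; exact: (fun l => tg_behav M lam b0 xs l).
move=> x u0 U hf hopt; have hx : inX p T x by case: hf.
have [hso hpl] := sigma_of_ok hx hA0.
split.
  exists (sigma_of x); split; last exact: rplan_sigma_of.
  split => // tau ht; rewrite -hopt; exact: (feas_le_payoff hf ht).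
have hf0 := BR_feas M lam b0 hx hT.
have hval l : Fl M lam x (tg M lam T b0 x l) l [::] [::] T = u00 M lam T b0 x l.
  by rewrite (BR_val M lam b0 x l (hA := [::]) (hB := [::])) // expr0 mul1r.
have ge l : u0 l <= u00 M lam T b0 x l.
  rewrite -hval; exact: (Fl_lb l hf hlam' hT (tg_behav M lam b0 x l)).
have eq l : u0 l = u00 M lam T b0 x l.
  have hs : \sum_l q l * (u00 M lam T b0 x l - u0 l) = 0.
    apply/le_anti/andP; split; last first.
      by apply: sumr_ge0 => l' _; apply: mulr_ge0; [exact: ltW | rewrite subr_ge0; exact: ge].
    under eq_bigr do rewrite mulrBr.
    rewrite sumrB subr_le0 -/(primal_obj q u0) hopt; exact: P2 hf0.
  have hn : forall l', predT l' -> 0 <= q l' * (u00 M lam T b0 x l' - u0 l').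
    by move=> l' _; apply: mulr_ge0; [exact: ltW | rewrite subr_ge0; exact: ge].
  have H := @psumr_eq0P _ _ predT (fun l' => q l' * (u00 M lam T b0 x l' - u0 l')) hn hs l isT.
  move: H => /eqP; rewrite mulf_eq0 (gt_eqF (hq l)) /= subr_eq0 => /eqP ->//.
move=> l; rewrite eq /u_sec; apply: inf_min.
  exists (tg M lam T b0 x l); first exact: tg_behav.
  by rewrite (usec_Fl M lam _ l hx hpl) hval.
move=> w [t bt ->]; rewrite (usec_Fl M lam _ l hx hpl).
exact: (Fl_lb l hf0 hlam' hT bt).
Qed.


Lemma inX_conv (I : finType) (mu : I -> R) (xs : I -> K -> seq A -> seq B -> A -> R) :
  dist mu -> (forall i, inX p T (xs i)) ->
  inX p T (fun k hA hB a => \sum_i mu i * xs i k hA hB a).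
Proof.
move=> [mu0 mu1] hxs; split.
- move=> k hA hB a hs hT1; apply: sumr_ge0 => i _; apply: mulr_ge0 => //.
  by case: (hxs i) => h _ _; apply: h.
- move=> k; rewrite exchange_big /=.
  under eq_bigr do rewrite -mulr_sumr (inX_sum (hxs _)).
  by rewrite -mulr_suml mu1 mul1r.
- move=> k hA hB a b hs hT1; rewrite exchange_big /=; apply: eq_bigr => i _.
  rewrite -mulr_sumr; congr (_ * _).
  by case: (hxs i) => _ _ h; apply: h.
Qed.

Lemma saddle1 (I J : finType) (pis : I -> K -> seq A -> seq B -> A -> R)
  (rhos : J -> L -> seq A -> seq B -> B -> R) (mu : I -> R) v :
  (forall i, strat1_ok T (pis i)) -> dist mu ->
  (forall g : L -> seq A -> seq B -> B, exists j, forall l hA hB b,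
     size hA = size hB -> (size hA < T)%N -> rhos j l hA hB b = (g l hA hB == b)%:R) ->
  (forall j, v <= \sum_i mu i * payoff M p q lam T (pis i) (rhos j)) ->
  inX p T (fun k hA hB a => \sum_i mu i * xp p (pis i) k hA hB a) /\
  forall tau, strat2_ok T tau ->
    v <= payoff M p q lam T (sigma_of (fun k hA hB a => \sum_i mu i * xp p (pis i) k hA hB a)) tau.
Proof.
move=> hpis hmu hcode hv.
have hxi i := xp_ok (hpis i) (fun k => ltW (hp k)) hT.
set x := fun k hA hB a => _.
have hx : inX p T x by apply: inX_conv => // i; case: (hxi i).
split => // tau ht.
apply: le_trans (feas_le_payoff (BR_feas M lam b0 hx hT) ht).
rewrite BR_payoff //.
have [_ hpl] := sigma_of_ok hx hA0.
have [j hj] := hcode (gbr M lam T b0 x).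
apply: le_trans (hv j) _; apply: eq_ler.
rewrite (payoff_Fl M q lam _ hx hpl).
under eq_bigr do rewrite (payoff_Fl M q lam _ (proj1 (hxi _)) (proj2 (hxi _))).
symmetry; transitivity (\sum_l q l * Fl M lam x (rhos j l) l [::] [::] T).
  apply: eq_bigr => l _; congr (_ * _); apply: Fl_ext => //.
  by move=> hA hB b hs hT'; rewrite hj.
have hlin t l : Fl M lam x t l [::] [::] T =
    \sum_i mu i * Fl M lam (xp p (pis i)) t l [::] [::] T.
  exact: (Fl_lin M lam mu (fun i => xp p (pis i)) t l T [::] [::]).
under [LHS]eq_bigr => l _ do rewrite (hlin (rhos j l) l) mulr_sumr.
rewrite exchange_big /=; apply: eq_bigr => i _.
by rewrite mulr_sumr; apply: eq_bigr => l _; ring.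
Qed.

End Half.

End HalfPart.
Import HalfPart.

Module EncPart.
Set Implicit Arguments. Unset Strict Implicit. Unset Printing Implicit Defensive.
Import Order.TTheory GRing.Theory Num.Theory.
Local Open Scope ring_scope.

Section Enc.
Variables (R : realType) (K A B X : finType) (T : nat).

Definition encS (Y : finType) (s : seq Y) : {ffun 'I_T -> option Y} :=
  [ffun i : 'I_T => nth None (map Some s) i].
Definition decS (Y : finType) (f : {ffun 'I_T -> option Y}) : seq Y :=
  pmap id [seq f i | i <- enum 'I_T].

Lemma pmap_none (Y : Type) (f : nat -> option Y) l :
  (forall i, i \in l -> f i = None) -> pmap id (map f l) = [::].
Proof.
elim: l => [//|i l IH] h /=.
rewrite (h i (mem_head _ _)) /=.
by apply: IH => j hj; apply: h; rewrite in_cons hj orbT.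
Qed.

Lemma pmap_some (Y : Type) (s : seq Y) : pmap id (map Some s) = s.
Proof. by elim: s => //= y s ->. Qed.

Lemma decK (Y : finType) (s : seq Y) : (size s <= T)%N -> decS (encS s) = s.
Proof.
move=> hs; rewrite /decS.
have -> : [seq (encS s) i | i <- enum 'I_T] = map (nth None (map Some s)) (iota 0 T).
  by rewrite -val_enum_ord -map_comp; apply: eq_map => i /=; rewrite ffunE.
rewrite -(subnKC hs) iotaD map_cat pmap_cat add0n.
rewrite [X in _ ++ X]pmap_none ?cats0; last first.
  by move=> i; rewrite mem_iota => /andP [h1 _]; rewrite nth_default // size_map.
have -> : map (nth None (map Some s)) (iota 0 (size s)) = map Some s.
  by rewrite -{2}(mkseq_nth None (map Some s)) size_map.
exact: pmap_some.
Qed.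

Definition Hist := ({ffun 'I_T -> option A} * {ffun 'I_T -> option B})%type.

Definition code (g : K -> seq A -> seq B -> X) : {ffun K * Hist -> X} :=
  [ffun kh => g kh.1 (decS kh.2.1) (decS kh.2.2)].

Definition behF (pi : {ffun K * Hist -> X}) k (hA : seq A) (hB : seq B) (x : X) : R :=
  (pi (k, (encS hA, encS hB)) == x)%:R.

Lemma behF_code g k hA hB x : (size hA <= T)%N -> (size hB <= T)%N ->
  behF (code g) k hA hB x = (g k hA hB == x)%:R.
Proof. by move=> h1 h2; rewrite /behF ffunE /= !decK. Qed.

Lemma behF_ok pi k : behav T (behF pi k).
Proof.
move=> hA hB _ _; split; first by move=> x; rewrite ler0n.
rewrite /behF (bigD1 (pi (k, (encS hA, encS hB)))) //= eqxx big1 ?addr0 //.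
by move=> x hx; rewrite eq_sym (negbTE hx).
Qed.

End Enc.

End EncPart.
Import EncPart.

Module SwapPart.
Set Implicit Arguments. Unset Strict Implicit. Unset Printing Implicit Defensive.
Import Order.TTheory GRing.Theory Num.Theory.
Local Open Scope ring_scope.
Local Open Scope classical_set_scope.

Definition flip (R : Type) (K Y Z X : Type) (f : K -> seq Y -> seq Z -> X -> R) :
  K -> seq Z -> seq Y -> X -> R := fun k hZ hY x => f k hY hZ x.

Section Swap.
Variables (R : realType) (K L A B : finType).

Definition Msw (M : K -> L -> A -> B -> R) : L -> K -> B -> A -> R :=
  fun l k b a => - M k l a b.
Definition flipW (W : K -> seq A -> seq B -> A -> B -> R) : K -> seq B -> seq A -> B -> A -> R :=
  fun k hB hA b a => - W k hA hB a b.

Lemma sw_cont M lam sigma tau k l : forall n hA hB, size hA = size hB ->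
  cont M lam sigma tau k l hA hB n =
  - cont (Msw M) lam (flip tau) (flip sigma) l k hB hA n.
Proof.
elim=> [|n IH] hA hB hs /=; first by rewrite oppr0.
rewrite exchange_big /= -sumrN; apply: eq_bigr => b _.
rewrite -sumrN; apply: eq_bigr => a _.
rewrite IH ?size_rcons ?hs // /flip /Msw; ring.
Qed.

Lemma sw_payoff M p q lam T sigma tau :
  payoff M p q lam T sigma tau = - payoff (Msw M) q p lam T (flip tau) (flip sigma).
Proof.
rewrite /payoff exchange_big /= -sumrN; apply: eq_bigr => l _.
rewrite -sumrN; apply: eq_bigr => k _.
by rewrite sw_cont //; ring.
Qed.

Lemma sw_behav T (X : finType) (s : seq A -> seq B -> X -> R) :
  behav T s -> behav T (fun hB hA x => s hA hB x).
Proof. by move=> h hB hA hs hT; apply: h => //; rewrite -hs. Qed.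

Lemma sw_behav' T (X : finType) (s : seq B -> seq A -> X -> R) :
  behav T s -> behav T (fun hA hB x => s hB hA x).
Proof. by move=> h hA hB hs hT; apply: h => //; rewrite -hs. Qed.

Lemma sw_strat1 T (sigma : K -> seq A -> seq B -> A -> R) :
  strat1_ok T sigma -> strat2_ok T (flip sigma).
Proof. by move=> h k; apply: sw_behav. Qed.

Lemma sw_strat1' T (sigma : K -> seq B -> seq A -> A -> R) :
  strat2_ok T sigma -> strat1_ok T (flip sigma).
Proof. by move=> h k; apply: sw_behav'. Qed.

Lemma sw_strat2 T (tau : L -> seq A -> seq B -> B -> R) :
  strat2_ok T tau -> strat1_ok T (flip tau).
Proof. by move=> h l; apply: sw_behav. Qed.

Lemma sw_strat2' T (tau : L -> seq B -> seq A -> B -> R) :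
  strat1_ok T tau -> strat2_ok T (flip tau).
Proof. by move=> h l; apply: sw_behav'. Qed.

Lemma sw_inY q T (y : L -> seq A -> seq B -> B -> R) :
  inY q T y <-> inX q T (flip y).
Proof.
split=> [[h1 h2 h3]|[h1 h2 h3]]; split => //.
- by move=> l hB hA b hs hT; apply: h1; rewrite -?hs.
- by move=> l hB hA b a hs hT; apply: h3; rewrite -?hs.
- by move=> l hA hB b hs hT; apply: (h1 l hB hA b); rewrite -?hs.
- by move=> l hA hB a b hs hT; apply: (h3 l hB hA b a); rewrite -?hs.
Qed.

Lemma sw_expr M lam (y : L -> seq A -> seq B -> B -> R) W k hA hB a' :
  lam * (\sum_l \sum_b' Msw M l k b' a' * flip y l hB hA b')
  + (1 - lam) * (\sum_b' flipW W k hB hA b' a') =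
  - (lam * (\sum_l \sum_b' M k l a' b' * y l hA hB b')
     + (1 - lam) * (\sum_b' W k hA hB a' b')).
Proof.
rewrite opprD -!mulrN -!sumrN; congr (_ * _ + _ * _).
  apply: eq_bigr => l _; rewrite -sumrN; apply: eq_bigr => b _.
  by rewrite /Msw /flip mulNr.
Qed.

Lemma sw_dual M q lam T y w0 W :
  dual_feas M q lam T y w0 W <->
  primal_feas (Msw M) q lam T (flip y) (fun k => - w0 k) (flipW W).
Proof.
split=> [[h1 h2 h3 h4]|[h1 h2 h3 h4]]; split.
- by move/sw_inY: h1.
- by move=> k hB hA b a hs hT; rewrite /flipW h2 ?oppr0 // -hs.
- by move=> k a'; rewrite sw_expr lerN2.
- move=> k hB hA b a a' hs hT.
  by rewrite -[rcons hB b]/(rcons hB b) sw_expr /flipW lerN2; apply: h4; rewrite -?hs.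
- by apply/sw_inY.
- move=> k hA hB a b hs hT.
  by apply: oppr_inj; rewrite oppr0 -[- W _ _ _ _ _]/(flipW W k hB hA b a) h2 -?hs.
- move=> k a'; rewrite -lerN2 -(sw_expr M lam y W k [::] [::] a'); exact: h3.
- move=> k hA hB a b a' hs hT.
  rewrite -lerN2 -(sw_expr M lam y W k (rcons hA a) (rcons hB b) a').
  by have := h4 k hB hA b a a'; rewrite /flipW; apply; rewrite -?hs.
Qed.

Lemma sw_rplan q T (tau : L -> seq A -> seq B -> B -> R) y :
  rplan2 q T tau y <-> rplan1 q T (flip tau) (flip y).
Proof.
split=> h.
- by move=> l hB hA b hs hT; rewrite /flip h // -?hs.
- by move=> l hA hB b hs hT; have := h l hB hA b; rewrite /flip; apply; rewrite -?hs.
Qed.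

End Swap.

Section Swap2.
Variables (R : realType) (K L A B : finType).

Lemma MswK (M : K -> L -> A -> B -> R) : Msw (Msw M) = M.
Proof.
apply: funext => k; apply: funext => l; apply: funext => a; apply: funext => b.
by rewrite /Msw opprK.
Qed.

Lemma sw_wsec (M : K -> L -> A -> B -> R) q lam T (y : L -> seq A -> seq B -> B -> R) k :
  w_sec M q lam T y k = - u_sec (Msw M) q lam T (flip y) k.
Proof.
rewrite /w_sec /u_sec /inf opprK; congr sup; apply/seteqP; split => z.
- move=> [s hs ->]; exists (\sum_l q l * cont (Msw M) lam (sigma_of (flip y))
       (fun _ => fun hB hA a => s hA hB a) l k [::] [::] T).
    by exists (fun hB hA a => s hA hB a); first exact: sw_behav.
  rewrite -sumrN; apply: eq_bigr => l _; rewrite -mulrN; congr (_ * _).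
  have := @sw_cont _ _ _ _ _ (Msw M) lam (sigma_of (flip y)) (fun _ => fun hB hA a => s hA hB a) l k T
    [::] [::] erefl.
  by rewrite MswK => ->; rewrite opprK.
- move=> [w [t ht ->] <-]; exists (fun hA hB a => t hB hA a); first exact: sw_behav'.
  rewrite -sumrN; apply: eq_bigr => l _; rewrite -mulrN; congr (_ * _).
  have := @sw_cont _ _ _ _ _ (Msw M) lam (sigma_of (flip y)) (fun _ => t) l k T
    [::] [::] erefl.
  by rewrite MswK => ->; rewrite opprK.
Qed.

End Swap2.

End SwapPart.
Import SwapPart.

Theorem theorem3 (R : realType) (K L A B : finType)
  (M : K -> L -> A -> B -> R) (p : K -> R) (q : L -> R) (lam : R) (T : nat) :
  0 < lam < 1 -> (1 <= T)%N -> (0 < #|A|)%N -> (0 < #|B|)%N ->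
  (forall k, 0 < p k) -> \sum_k p k = 1 ->
  (forall l, 0 < q l) -> \sum_l q l = 1 ->
  [/\ (* V = max of the primal LP, attained *)
      (exists x u0 U, primal_feas M p lam T x u0 U /\
                      primal_obj q u0 = value M p q lam T),
      (forall x u0 U, primal_feas M p lam T x u0 U ->
                      primal_obj q u0 <= value M p q lam T) &
      (* properties of optimal primal solutions *)
      (forall x u0 U, primal_feas M p lam T x u0 U ->
         primal_obj q u0 = value M p q lam T ->
         (exists sigma, security1 M p q lam T sigma /\ rplan1 p T sigma x) /\
         (forall l, u_sec M p lam T x l = u0 l))] /\
  [/\ (* V = min of the dual LP, attained *)
      (exists y w0 W, dual_feas M q lam T y w0 W /\
                      dual_obj p w0 = value M p q lam T),
      (forall y w0 W, dual_feas M q lam T y w0 W ->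
                      value M p q lam T <= dual_obj p w0) &
      (* properties of optimal dual solutions *)
      (forall y w0 W, dual_feas M q lam T y w0 W ->
         dual_obj p w0 = value M p q lam T ->
         (exists tau, security2 M p q lam T tau /\ rplan2 q T tau y) /\
         (forall k, w_sec M q lam T y k = w0 k))].
Proof.
move=> hlam hT hA0 hB0 hp hp1 hq hq1.
case/card_gt0P: hA0 (hA0) => a0 _ hA0.
case/card_gt0P: hB0 (hB0) => b0 _ hB0.
pose pis (i : {ffun K * Hist A B T -> A}) : K -> seq A -> seq B -> A -> R := behF R i.
pose rhos (j : {ffun L * Hist A B T -> B}) : L -> seq A -> seq B -> B -> R := behF R j.
pose Am i j := payoff M p q lam T (pis i) (rhos j).
have [v [mu [nu [dmu dnu hv1 hv2]]]] := minimax [ffun _ => a0] [ffun _ => b0] Am.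
have hcode1 : forall g : L -> seq A -> seq B -> B, exists j, forall l hA hB b,
    size hA = size hB -> (size hA < T)%N -> rhos j l hA hB b = (g l hA hB == b)%:R.
  move=> g; exists (code T g) => l hA hB b hs hT'.
  have h2 : (size hB <= T)%N by rewrite -hs ltnW.
  exact: (behF_code R g l b (ltnW hT') h2).
have [hxs Hlb] := saddle1 hlam hT hA0 b0 hp hq (pis := pis) (rhos := rhos) (fun i k => behF_ok R i k) dmu hcode1 hv1.
set xs := fun k hA hB a => _ in hxs Hlb.
have hcode2 : forall g : K -> seq B -> seq A -> A, exists i, forall k hB hA a,
    size hB = size hA -> (size hB < T)%N -> flip (pis i) k hB hA a = (g k hB hA == a)%:R.
  move=> g; exists (code T (fun k hA hB => g k hB hA)) => k hB hA a hs hT'.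
  have h2 : (size hA <= T)%N by rewrite -hs ltnW.
  exact: (behF_code R (fun k hA hB => g k hB hA) k a h2 (ltnW hT')).
have hv' : forall i, - v <= \sum_j nu j * payoff (Msw M) q p lam T (flip (rhos j)) (flip (pis i)).
  move=> i; rewrite lerNl -sumrN; apply: le_trans (hv2 i); apply: eq_ler.
  apply: eq_bigr => j _; rewrite /Am (sw_payoff M p q lam T (pis i) (rhos j)).
  by rewrite mulNr mulrC.
have [hys Hlb'] := saddle1 hlam hT hB0 a0 hq hp (pis := fun j => flip (rhos j)) (rhos := fun i => flip (pis i))
  (fun j => sw_strat2 (fun l => behF_ok R j l)) dnu hcode2 hv'.
set ys' := fun l hB hA b => _ in hys Hlb'.
have [hso hplo] := sigma_of_ok hxs hA0.
have [hso' hplo'] := sigma_of_ok hys hB0.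
pose taus : L -> seq A -> seq B -> B -> R := flip (sigma_of ys').
have htaus : strat2_ok T taus by exact: sw_strat2' hso'.
have Hub : forall sigma, strat1_ok T sigma -> payoff M p q lam T sigma taus <= v.
  move=> sigma hs; rewrite (sw_payoff M p q lam T sigma taus) lerNl.
  exact: (Hlb' (flip sigma) (sw_strat1 hs)).
have ubv : ubound [set w | exists2 s, strat1_ok T s &
    w = inf [set w' | exists2 t, strat2_ok T t & w' = payoff M p q lam T s t]] v.
  move=> w [s hs ->].
  have [c hc] := payoff_lb M hlam hT b0 hp hq hs.
  have hl : has_lbound [set w' | exists2 t, strat2_ok T t & w' = payoff M p q lam T s t].
    by exists c => w' [t ht ->]; exact: hc.
  apply: le_trans (Hub s hs).
  by apply: (ge_inf hl); exists taus.
have Hval : value M p q lam T = v.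
  apply/le_anti/andP; split.
    apply: ge_sup => //.
    by exists (inf [set w' | exists2 t, strat2_ok T t & w' = payoff M p q lam T (sigma_of xs) t]); exists (sigma_of xs).
  apply: le_trans (ub_le_sup (ex_intro _ v ubv) _); last by exists (sigma_of xs).
  apply: lb_le_inf; first by exists (payoff M p q lam T (sigma_of xs) taus); exists taus.
  by move=> w [t ht ->]; exact: Hlb.
have [P1 P2 P3] := half1 hlam hT hA0 b0 hq (ex_intro _ taus (conj htaus Hub))
  (ex_intro _ xs (conj hxs Hlb)).
have Hub' : forall sigma', strat1_ok T sigma' ->
    payoff (Msw M) q p lam T sigma' (flip (sigma_of xs)) <= - v.
  move=> sigma' hs'; rewrite lerNr.
  have := Hlb (flip sigma') (sw_strat2' hs').
  by rewrite (sw_payoff M p q lam T (sigma_of xs) (flip sigma')).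
have [D1 D2 D3] := half1 hlam hT hB0 a0 hp
  (ex_intro _ (flip (sigma_of xs)) (conj (sw_strat1 hso) Hub'))
  (ex_intro _ ys' (conj hys Hlb')).
rewrite /security1 /security2 Hval; split; split.
- exact: P1.
- exact: P2.
- move=> x u0 U hf ho; have [[sigma [[h1 h2] h3]] h4] := P3 x u0 U hf ho.
  by split => //; exists sigma.
- have [x' [u0' [U' [hf ho]]]] := D1.
  exists (flip x'), (fun k => - u0' k), (fun k hA hB a b => - U' k hB hA b a); split.
    apply/sw_dual.
    have -> : (fun k => - - u0' k) = u0' by apply: funext => k; rewrite opprK.
    have -> : flipW (fun k hA hB a b => - U' k hB hA b a) = U'.
      apply: funext => k; apply: funext => hB; apply: funext => hA.
      apply: funext => b; apply: funext => a; by rewrite /flipW opprK.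
    exact: hf.
  rewrite /dual_obj; under eq_bigr do rewrite mulrN.
  by rewrite sumrN; move: ho; rewrite /primal_obj => ->; rewrite opprK.
- move=> y w0 W hf.
  have := D2 _ _ _ (proj1 (sw_dual M q lam T y w0 W) hf).
  rewrite /primal_obj /dual_obj; under eq_bigr do rewrite mulrN.
  by rewrite sumrN lerN2.
- move=> y w0 W hf ho.
  have hf' := proj1 (sw_dual M q lam T y w0 W) hf.
  have ho' : primal_obj p (fun k => - w0 k) = - v.
    rewrite /primal_obj; under eq_bigr do rewrite mulrN.
    by rewrite sumrN -ho.
  have [[sigma' [[h1 h2] h3]] h4] := D3 _ _ _ hf' ho'.
  split.
    exists (flip sigma'); split; [split|].
    + exact: sw_strat2' h1.
    + move=> sigma hs; rewrite (sw_payoff M p q lam T sigma (flip sigma')) lerNl.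
      exact: (h2 (flip sigma) (sw_strat1 hs)).
    + by apply/sw_rplan.
  by move=> k; rewrite sw_wsec h4 opprK.
Qed.
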